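(* Let $\nu>0$ be a real number. Define integers $s_1=4$ and $s_{k+1}=\lfloor 10^{\nu s_k}\rfloor s_k+1$ for $k\ge 1$. Then for every sequence $(a_n)_{n\ge1}$ with $a_n\in\{1,2\}$ for all $n$, the real number $\xi=\sum_{n=1}^{\infty}a_n10^{-s_n}$ is a $\nu$-Liouville number. In particular $\sum_{n=1}^\infty 10^{-s_n}\in\mathbb{L}^{(\nu)}$.
   Context: A real number $\xi$ is a Liouville number if there exist a sequence of rational numbers $p_k/q_k$ ($p_k,q_k$ integers, $q_k>1$) and a sequence of positive reals $(\omega_k)_k$ with $\omega_k\to\infty$ such that $0<|\xi-p_k/q_k|<q_k^{-\omega_k}$ for all $k$. For a real number $\xi$, let $S(\xi)$ be the set of real numbers $\nu^*\ge 0$ for which there exist a sequence of rationals $p_k/q_k$ (integers $q_k>1$) and a sequence of positive reals $(\omega_k)_k$ such that $0<|\xi-p_k/q_k|<q_k^{-\omega_k}$ for all $k$ and $\omega_k/q_k^{\nu^*}\to\infty$ as $k\to\infty$. For $\nu\in[0,\infty]$, $\xi$ is called a $\nu$-Liouville number if $\xi$ is a Liouville number and $\sup S(\xi)=\nu$; the set of $\nu$-Liouville numbers is denoted $\mathbb{L}^{(\nu)}$. In particular, $\xi$ is an $\infty$-Liouville number iff $S(\xi)=[0,\infty)$. *)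

(* Defs.v *)
From Stdlib Require Import Reals.
From Coquelicot Require Import Coquelicot.
Open Scope R_scope.

Definition approx (xi : R) (p q : Z) (omega : R) : Prop :=
  0 < Rabs (xi - IZR p / IZR q) < Rpower (IZR q) (- omega).

Definition Liouville (xi : R) : Prop :=
  exists (p q : nat -> Z) (omega : nat -> R),
    (forall k, (1 < q k)%Z) /\ (forall k, 0 < omega k) /\
    is_lim_seq omega p_infty /\
    (forall k, approx xi (p k) (q k) (omega k)).

Definition Sset (xi : R) (nustar : R) : Prop :=
  0 <= nustar /\
  exists (p q : nat -> Z) (omega : nat -> R),
    (forall k, (1 < q k)%Z) /\ (forall k, 0 < omega k) /\
    (forall k, approx xi (p k) (q k) (omega k)) /\
    is_lim_seq (fun k => omega k / Rpower (IZR (q k)) nustar) p_infty.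

Definition nu_Liouville (nu xi : R) : Prop :=
  Liouville xi /\ is_lub (Sset xi) nu.

(* s k is s_{k+1} of the paper: s_1 = 4, s_{k+1} = floor(10^(nu s_k)) s_k + 1 *)
Fixpoint sseq (nu : R) (k : nat) : Z :=
  match k with
  | O => 4%Z
  | S k' => (Int_part (Rpower 10 (nu * IZR (sseq nu k'))) * sseq nu k' + 1)%Z
  end.

(* Main.v *)
Require Import Defs.
From Stdlib Require Import Reals Lra Lia ZArith.
From Coquelicot Require Import Coquelicot.
Open Scope R_scope.

Definition P (x : R) := Rpower 10 x.

Lemma P_pos x : 0 < P x.
Proof. unfold P, Rpower. apply exp_pos. Qed.
Lemma P_plus x y : P (x + y) = P x * P y.
Proof. unfold P. apply Rpower_plus. Qed.
Lemma P_opp x : P (- x) = / P x.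
Proof. unfold P. apply Rpower_Ropp. Qed.
Lemma P_lt x y : x < y -> P x < P y.
Proof. intros; unfold P; apply Rpower_lt; lra. Qed.
Lemma P_le x y : x <= y -> P x <= P y.
Proof. intros; unfold P; apply Rle_Rpower; lra. Qed.
Lemma P_0 : P 0 = 1.
Proof. unfold P; apply Rpower_O; lra. Qed.
Lemma P_1 : P 1 = 10.
Proof. unfold P; apply Rpower_1; lra. Qed.
Lemma ln10_ge1 : 1 <= ln 10.
Proof.
  rewrite <- (ln_exp 1). apply ln_le. apply exp_pos. pose proof exp_le_3; lra.
Qed.
Lemma P_lin x : 0 <= x -> 1 + x <= P x.
Proof.
  intros Hx. unfold P, Rpower. pose proof (exp_ineq1_le (x * ln 10)).
  pose proof ln10_ge1. nra.
Qed.
Lemma P_ge1 x : 0 <= x -> 1 <= P x.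
Proof. intros; pose proof (P_lin x); lra. Qed.
Lemma ln_P x : ln (P x) = x * ln 10.
Proof. unfold P, Rpower. apply ln_exp. Qed.

Lemma IZR_pow10 (z : Z) : (0 <= z)%Z -> IZR (10 ^ z) = P (IZR z).
Proof.
  intros Hz. rewrite <- (Z2Nat.id z Hz).
  rewrite <- pow_IZR. rewrite <- INR_IZR_INZ. unfold P. rewrite Rpower_pow; lra.
Qed.

Lemma Int_part_ge1 x : 1 <= x -> 1 <= IZR (Int_part x).
Proof.
  intros H. destruct (base_Int_part x) as [H1 H2].
  assert (0 < IZR (Int_part x)) by lra. apply lt_IZR in H0.
  apply IZR_le. lia.
Qed.

Lemma Int_part_mono x y : x <= y -> IZR (Int_part x) <= IZR (Int_part y).
Proof.
  intros H. destruct (base_Int_part x) as [H1 H2]. destruct (base_Int_part y) as [H3 H4].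
  apply IZR_le. destruct (Z_le_gt_dec (Int_part x) (Int_part y)) as [h|h]; auto.
  assert (IZR (Int_part y + 1) <= IZR (Int_part x)) by (apply IZR_le; lia).
  rewrite plus_IZR in H0. lra.
Qed.

Section Seq.
Variable nu : R.
Hypothesis hnu : 0 < nu.

Definition Sq k := IZR (sseq nu k).
Definition Fq k := IZR (Int_part (P (nu * Sq k))).

Lemma Sq_S k : Sq (S k) = Fq k * Sq k + 1.
Proof. unfold Sq, Fq, P. simpl. rewrite plus_IZR, mult_IZR. reflexivity. Qed.

Lemma Sq_ge k : 4 + INR k <= Sq k /\ 1 <= Fq k.
Proof.
  induction k as [|k IH].
  - unfold Sq; simpl. split; [lra|]. unfold Fq. apply Int_part_ge1, P_ge1.
    unfold Sq; simpl; apply Rmult_le_pos; lra.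
  - destruct IH as [IH1 IH2]. pose proof (pos_INR k). rewrite S_INR, Sq_S. split; [nra|].
    unfold Fq. apply Int_part_ge1, P_ge1. rewrite Sq_S. apply Rmult_le_pos; [lra|]. nra.
Qed.

Lemma Fq_bounds k : P (nu * Sq k) - 1 < Fq k <= P (nu * Sq k).
Proof. unfold Fq. destruct (base_Int_part (P (nu * Sq k))). lra. Qed.

Lemma Sq_int k : (0 <= sseq nu k)%Z.
Proof. pose proof (Sq_ge k) as [H _]. unfold Sq in H. apply le_IZR. pose proof (pos_INR k). lra. Qed.

Lemma Sq_mono k m : (k <= m)%nat -> Sq k + INR (m - k) <= Sq m.
Proof.
  induction 1.
  - rewrite Nat.sub_diag. simpl. lra.
  - rewrite Nat.sub_succ_l by auto. rewrite S_INR, Sq_S.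
    destruct (Sq_ge m). pose proof (pos_INR m).
    assert (0 <= (Fq m - 1) * Sq m) by (apply Rmult_le_pos; lra). lra.
Qed.



Lemma P_INR_opp n : P (- INR n) = (/ 10) ^ n.
Proof. rewrite P_opp. unfold P. rewrite Rpower_pow by lra. rewrite pow_inv. reflexivity. Qed.

Variable a : nat -> Z.
Hypothesis ha : forall n, a n = 1%Z \/ a n = 2%Z.

Definition u n := IZR (a n) * P (- Sq n).

Lemma u_shift k m : 0 < u (k + m) <= 2 * P (- Sq k) * (/ 10) ^ m.
Proof.
  unfold u. pose proof (Sq_mono k (k + m) ltac:(lia)) as H.
  replace (k + m - k)%nat with m in H by lia.
  assert (Hle : P (- Sq (k + m)) <= P (- Sq k) * (/10) ^ m).
  { rewrite <- P_INR_opp, <- P_plus. apply P_le. lra. }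
  pose proof (P_pos (- Sq (k + m))).
  destruct (ha (k + m)) as [E|E]; rewrite E; simpl; split; nra.
Qed.

Lemma ex_series_geo c : ex_series (fun m => c * (/ 10) ^ m).
Proof.
  assert (H : Rabs (/10) < 1) by (rewrite Rabs_pos_eq; lra).
  exact (ex_series_scal_l c _ (ex_series_geom _ H)).
Qed.

Lemma ex_series_shift k : ex_series (fun m => u (k + m)).
Proof.
  apply (@ex_series_le R_AbsRing R_CompleteNormedModule _ (fun m => 2 * P (- Sq k) * (/ 10) ^ m)).
  - intros m. change (norm (u (k + m))) with (Rabs (u (k + m))).
    destruct (u_shift k m). rewrite Rabs_pos_eq; lra.
  - apply ex_series_geo.
Qed.

Lemma ex_series_u : ex_series u.
Proof. apply (ex_series_ext (fun m => u (0 + m))). reflexivity. apply ex_series_shift. Qed.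

Lemma Series_nonneg (f : nat -> R) : (forall n, 0 <= f n) -> ex_series f -> 0 <= Series f.
Proof.
  intros H He. pose proof (Series_le (fun n => 0 * f n) f) as L.
  rewrite Series_scal_l in L. assert (0 * Series f <= Series f).
  { apply L; auto. intros n; specialize (H n); lra. } lra.
Qed.

Definition T k := Series (fun m => u (S k + m)).

Lemma T_bounds k : u (S k) <= T k <= 3 * P (- Sq (S k)).
Proof.
  split.
  - unfold T. rewrite Series_incr_1 by apply ex_series_shift.
    replace (S k + 0)%nat with (S k) by lia.
    assert (0 <= Series (fun m => u (S k + S m))).
    { apply Series_nonneg. intros n; destruct (u_shift (S k) (S n)); lra.
      apply (ex_series_ext (fun m => u (S (S k) + m))).
      intros n; f_equal; lia. apply ex_series_shift. }
    lra.
  - unfold T. eapply Rle_trans.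
    apply (Series_le _ (fun m => 2 * P (- Sq (S k)) * (/ 10) ^ m)).
    intros m; destruct (u_shift (S k) m); lra. apply ex_series_geo.
    rewrite Series_scal_l, Series_geom by (rewrite Rabs_pos_eq; lra).
    pose proof (P_pos (- Sq (S k))). lra.
Qed.

Definition xi := Series u.

Lemma xi_split k : xi = sum_f_R0 u k + T k.
Proof.
  unfold xi, T. rewrite (Series_incr_n u (S k)) by (lia || apply ex_series_u). reflexivity.
Qed.

Fixpoint pp k : Z := match k with
  | O => a O
  | S k' => (pp k' * 10 ^ (sseq nu (S k') - sseq nu k') + a (S k'))%Z end.
Definition qq k : Z := (10 ^ sseq nu k)%Z.

Lemma qq_val k : IZR (qq k) = P (Sq k).
Proof. unfold qq. apply IZR_pow10, Sq_int. Qed.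

Lemma pp_S k : pp (S k) = (pp k * 10 ^ (sseq nu (S k) - sseq nu k) + a (S k))%Z.
Proof. reflexivity. Qed.

Lemma pp_val k : IZR (pp k) = P (Sq k) * sum_f_R0 u k.
Proof.
  induction k as [|k IH].
  - simpl. unfold u. rewrite (Rmult_comm (IZR _)), <- Rmult_assoc, <- P_plus.
    replace (Sq 0 + - Sq 0) with 0 by ring. rewrite P_0; ring.
  - rewrite pp_S, plus_IZR, mult_IZR, IH, IZR_pow10.
    2:{ pose proof (Sq_mono k (S k) ltac:(lia)). unfold Sq in H. apply le_IZR.
        rewrite minus_IZR. pose proof (pos_INR (S k - k)). lra. }
    rewrite minus_IZR. fold (Sq (S k)) (Sq k).
    assert (E1 : P (Sq (S k)) = P (Sq k) * P (Sq (S k) - Sq k)).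
    { rewrite <- P_plus. f_equal; ring. }
    assert (E2 : P (Sq (S k)) * u (S k) = IZR (a (S k))).
    { unfold u. rewrite (Rmult_comm (IZR _)), <- Rmult_assoc, <- P_plus.
      replace (Sq (S k) + - Sq (S k)) with 0 by ring. rewrite P_0; ring. }
    change (sum_f_R0 u (S k)) with (sum_f_R0 u k + u (S k)).
    rewrite Rmult_plus_distr_l, E2, E1. ring.
Qed.

Lemma r_val k : IZR (pp k) / IZR (qq k) = sum_f_R0 u k.
Proof.
  rewrite pp_val, qq_val. field. apply Rgt_not_eq, P_pos.
Qed.

Lemma xi_minus_r k : xi - IZR (pp k) / IZR (qq k) = T k.
Proof. rewrite r_val, (xi_split k). ring. Qed.

End Seq.

Lemma lim_lower (v : nat -> R) d : 0 < d -> (forall k, d * INR k <= v k) -> is_lim_seq v p_infty.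
Proof.
  intros Hd H. apply is_lim_seq_spec. intros M.
  destruct (INR_unbounded (M / d)) as [N HN]. exists N. intros n Hn.
  apply le_INR in Hn. specialize (H n).
  assert (M / d * d < INR n * d) by (apply Rmult_lt_compat_r; lra).
  replace (M / d * d) with M in H0 by (field; lra). lra.
Qed.

Lemma qq_gt1 nu k : 0 < nu -> (1 < qq nu k)%Z.
Proof.
  intros hnu. apply lt_IZR. rewrite (qq_val _ hnu). pose proof (Sq_ge nu hnu k) as [H _].
  pose proof (pos_INR k). pose proof (P_lin (Sq nu k)). lra.
Qed.

Lemma approx_k nu a (hnu : 0 < nu) (ha : forall n, a n = 1%Z \/ a n = 2%Z) k :
  approx (xi nu a) (pp nu a k) (qq nu k) (Fq nu k).
Proof.
  unfold approx. rewrite (xi_minus_r nu hnu a ha). pose proof (T_bounds nu hnu a ha k) as [H1 H2].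
  pose proof (u_shift nu hnu a ha (S k) 0) as [H3 _]. rewrite Nat.add_0_r in H3.
  rewrite Rabs_pos_eq by lra. split; [lra|].
  rewrite (qq_val _ hnu).
  replace (Rpower (P (Sq nu k)) (- Fq nu k)) with (P (Sq nu k * - Fq nu k)) by (unfold P; rewrite Rpower_mult; reflexivity).
  replace (Sq nu k * - Fq nu k) with (1 + - Sq nu (S k)) by (rewrite Sq_S; ring).
  rewrite P_plus, P_1. pose proof (P_pos (- Sq nu (S k))). lra.
Qed.

Lemma Sset_lower nu a (hnu : 0 < nu) (ha : forall n, a n = 1%Z \/ a n = 2%Z) ns :
  0 <= ns < nu -> Sset (xi nu a) ns.
Proof.
  intros [H0 H1]. split; [lra|].
  exists (pp nu a), (qq nu), (Fq nu). split; [|split; [|split]].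
  - intros k; apply qq_gt1; auto.
  - intros k. pose proof (Sq_ge nu hnu k) as [_ H]. lra.
  - intros k; apply approx_k; auto.
  - apply (lim_lower _ (nu - ns)); [lra|]. intros k.
    rewrite (qq_val _ hnu).
    replace (Rpower (P (Sq nu k)) ns) with (P (Sq nu k * ns)) by (unfold P; rewrite Rpower_mult; reflexivity).
    pose proof (Fq_bounds nu k) as [F1 _].
    pose proof (Sq_ge nu hnu k) as [S1 _].
    pose proof (pos_INR k).
    replace (nu * Sq nu k) with (Sq nu k * ns + (nu - ns) * Sq nu k) in F1 by ring.
    rewrite P_plus in F1.
    pose proof (P_pos (Sq nu k * ns)) as Q0.
    pose proof (P_ge1 (Sq nu k * ns) ltac:(apply Rmult_le_pos; lra)) as Q1.
    pose proof (P_lin ((nu - ns) * Sq nu k) ltac:(apply Rmult_le_pos; lra)) as Q2.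
    apply (Rmult_le_reg_r (P (Sq nu k * ns))); auto.
    replace (Fq nu k / P (Sq nu k * ns) * P (Sq nu k * ns)) with (Fq nu k) by (field; lra).
    assert ((nu - ns) * INR k <= (nu - ns) * Sq nu k) by (apply Rmult_le_compat_l; lra).
    set (X := P (Sq nu k * ns)) in *. set (Y := P ((nu - ns) * Sq nu k)) in *.
    assert (X * ((nu - ns) * INR k) <= X * (Y - 1)) by (apply Rmult_le_compat_l; lra).
    assert (X * (Y - 1) <= X * Y - 1) by lra. lra.
Qed.

Section Upper.
Variable nu : R.
Hypothesis hnu : 0 < nu.
Variable a : nat -> Z.
Hypothesis ha : forall n, a n = 1%Z \/ a n = 2%Z.

Definition g j := Sq nu (S j) - Sq nu j.

Lemma g_ge j : Fq nu j <= g j.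
Proof.
  unfold g. rewrite Sq_S. destruct (Sq_ge nu hnu j). pose proof (pos_INR j).
  assert (0 <= (Fq nu j - 1) * (Sq nu j - 1)) by (apply Rmult_le_pos; lra). lra.
Qed.

Lemma Fq_mono j : Fq nu j <= Fq nu (S j).
Proof.
  unfold Fq. apply Int_part_mono, P_le. apply Rmult_le_compat_l; [lra|].
  pose proof (Sq_mono nu hnu j (S j) ltac:(lia)). pose proof (pos_INR (S j - j)). lra.
Qed.

Lemma g_mono j : g j <= g (S j).
Proof.
  unfold g. pose proof (Fq_mono j).
  destruct (Sq_ge nu hnu j). destruct (Sq_ge nu hnu (S j)). pose proof (pos_INR j).
  pose proof (Sq_mono nu hnu j (S j) ltac:(lia)). pose proof (pos_INR (S j - j)).
  pose proof (Sq_S nu (S j)). pose proof (Sq_S nu j).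
  assert ((Fq nu j - 1) * Sq nu j <= (Fq nu (S j) - 1) * Sq nu (S j)).
  { apply Rmult_le_compat; lra. } lra.
Qed.

Lemma g_exists Q : exists N, 6 * Q <= P (g N).
Proof.
  destruct (INR_unbounded (6 * Q / nu)) as [N HN]. exists N.
  pose proof (g_ge N). pose proof (Fq_bounds nu N) as [F1 _].
  destruct (Sq_ge nu hnu N) as [S1 S2]. pose proof (pos_INR N).
  pose proof (P_lin (g N) ltac:(lra)).
  pose proof (P_lin (nu * Sq nu N) ltac:(apply Rmult_le_pos; lra)).
  assert (HH : 6 * Q / nu * nu < INR N * nu) by (apply Rmult_lt_compat_r; lra).
  replace (6 * Q / nu * nu) with (6 * Q) in HH by (field; lra).
  assert (INR N * nu <= nu * Sq nu N) by nra. lra.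
Qed.

Lemma g_min Q : exists j, 6 * Q <= P (g j) /\ (j = O \/ exists i, j = S i /\ P (g i) < 6 * Q).
Proof.
  destruct (g_exists Q) as [N HN]. induction N as [|N IH].
  - exists O; auto.
  - destruct (Rle_lt_dec (6 * Q) (P (g N))) as [h|h].
    + apply IH; auto.
    + exists (S N); split; auto. right; exists N; auto.
Qed.

Definition rr k := IZR (pp nu a k) / IZR (qq nu k).

Lemma key_lower (p q : Z) j : (1 < q)%Z -> 6 * IZR q <= P (g j) ->
  IZR p / IZR q <> rr j -> 1 / (2 * IZR q * P (Sq nu j)) <= Rabs (xi nu a - IZR p / IZR q).
Proof.
  intros Hq H6 Hne. apply IZR_lt in Hq. set (Q := IZR q) in *.
  set (R0 := P (Sq nu j)). assert (HR : 0 < R0) by apply P_pos.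
  assert (Hd : 1 / (Q * R0) <= Rabs (IZR p / Q - rr j)).
  { unfold rr. rewrite (qq_val _ hnu). fold R0.
    assert (E : IZR p / Q - IZR (pp nu a j) / R0 = IZR (p * qq nu j - pp nu a j * q) / (Q * R0)).
    { rewrite minus_IZR, !mult_IZR, (qq_val _ hnu). fold R0 Q. field. lra. }
    rewrite E. unfold Rdiv. rewrite Rabs_mult, Rabs_inv, (Rabs_pos_eq (Q * R0)) by nra.
    assert (1 <= Rabs (IZR (p * qq nu j - pp nu a j * q))).
    { rewrite Rabs_Zabs. apply IZR_le.
      destruct (Z.eq_dec (p * qq nu j - pp nu a j * q) 0) as [Z0|Z0]; [|lia].
      exfalso. apply Hne. unfold rr. apply (f_equal IZR) in Z0.
      rewrite minus_IZR, !mult_IZR in Z0. rewrite (qq_val _ hnu) in *. fold R0 Q in Z0 |- *.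
      field_simplify_eq; lra. }
    assert (0 < / (Q * R0)) by (apply Rinv_0_lt_compat; nra). nra. }
  assert (HT : Rabs (xi nu a - rr j) <= 1 / (2 * Q * R0)).
  { unfold rr. rewrite (xi_minus_r nu hnu a ha). destruct (T_bounds nu hnu a ha j) as [T1 T2].
    pose proof (u_shift nu hnu a ha (S j) 0) as [U _]. rewrite Nat.add_0_r in U.
    rewrite Rabs_pos_eq by lra.
    replace (- Sq nu (S j)) with (- Sq nu j + - g j) in T2 by (unfold g; ring).
    rewrite P_plus, !P_opp in T2. fold R0 in T2.
    pose proof (P_pos (g j)).
    assert (/ P (g j) <= / (6 * Q)) by (apply Rinv_le_contravar; lra).
    assert (/ R0 * / P (g j) <= / R0 * / (6 * Q)).
    { apply Rmult_le_compat_l; [|lra]. left; apply Rinv_0_lt_compat; lra. }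
    replace (1 / (2 * Q * R0)) with (3 * (/ R0 * / (6 * Q))) by (field; lra). lra. }
  pose proof (Rabs_triang_inv (IZR p / Q - rr j) (xi nu a - rr j)).
  replace (IZR p / Q - rr j - (xi nu a - rr j)) with (- (xi nu a - IZR p / Q)) in H by ring.
  rewrite Rabs_Ropp in H.
  replace (1 / (Q * R0)) with (2 * (1 / (2 * Q * R0))) in Hd by (field; lra). lra.
Qed.



Lemma rr_S j : rr (S j) = rr j + u nu a (S j).
Proof. unfold rr. rewrite !(r_val nu hnu a). reflexivity. Qed.

Lemma key2 (p q : Z) j : (1 < q)%Z -> 6 * IZR q <= P (g j) ->
  1 / (2 * IZR q * P (Sq nu (S j))) <= Rabs (xi nu a - IZR p / IZR q).
Proof.
  intros Hq H6. pose proof Hq as Hq'. apply IZR_lt in Hq'.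
  destruct (Req_dec (IZR p / IZR q) (rr j)) as [E|E].
  - apply key_lower; auto.
    + pose proof (g_mono j). pose proof (P_le _ _ H). lra.
    + rewrite rr_S, E. pose proof (u_shift nu hnu a ha (S j) 0) as [U _].
      rewrite Nat.add_0_r in U. lra.
  - eapply Rle_trans; [|apply (key_lower p q j); auto].
    pose proof (Sq_mono nu hnu j (S j) ltac:(lia)). pose proof (pos_INR (S j - j)).
    pose proof (P_le (Sq nu j) (Sq nu (S j)) ltac:(lra)). pose proof (P_pos (Sq nu j)).
    unfold Rdiv. rewrite !Rmult_1_l. apply Rinv_le_contravar; [nra|].
    apply Rmult_le_compat_l; lra.
Qed.

Variable ns : R.
Hypothesis hns : nu < ns.

Definition dl := ns - nu.
Definition Kc := 2 * ns / dl.
Definition S0 := ln (Kc + 1) / (nu * ln 10).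
Definition Bc := 1 + 2 / dl + (Kc * S0 + 2) * P (ns * S0).

Lemma Kc_pos : 0 < Kc.
Proof. unfold Kc, dl. apply Rdiv_lt_0_compat; lra. Qed.

Lemma S0_pos : 0 < S0.
Proof.
  unfold S0. pose proof Kc_pos. pose proof ln10_ge1.
  apply Rdiv_lt_0_compat; [|nra]. rewrite <- ln_1. apply ln_increasing; lra.
Qed.

Lemma Hbound i : (Sq nu (S i) + 1) * P (ns * Sq nu i - dl * Sq nu (S i)) <= Bc.
Proof.
  pose proof Kc_pos as HK. pose proof S0_pos as HS0.
  assert (Hdl : 0 < dl) by (unfold dl; lra).
  destruct (Sq_ge nu hnu i) as [S1 F1]. pose proof (pos_INR i).
  pose proof (Sq_S nu i) as ES.
  set (s := Sq nu i) in *. set (t := Sq nu (S i)) in *.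
  assert (Ht : 4 <= t) by nra.
  assert (B2 : 0 <= (Kc * S0 + 2) * P (ns * S0)).
  { apply Rmult_le_pos; [nra|]. left; apply P_pos. }
  unfold Bc.
  destruct (Rle_lt_dec Kc (Fq nu i)) as [h|h].
  - assert (Kc * s <= t) by nra.
    assert (ns * s <= dl * t / 2).
    { unfold Kc in H0. replace (ns * s) with (dl / 2 * (2 * ns / dl * s)) by (field; lra).
      apply (Rmult_le_compat_l (dl / 2)) in H0; [|lra]. lra. }
    assert (E1 : P (ns * s - dl * t) <= / P (dl * t / 2)).
    { rewrite <- P_opp. apply P_le. lra. }
    pose proof (P_lin (dl * t / 2) ltac:(nra)).
    assert (E2 : / P (dl * t / 2) <= / (1 + dl * t / 2)) by (apply Rinv_le_contravar; nra).
    assert ((t + 1) * P (ns * s - dl * t) <= (t + 1) * / (1 + dl * t / 2)).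
    { apply Rmult_le_compat_l; lra. }
    assert ((t + 1) * / (1 + dl * t / 2) <= 1 + 2 / dl).
    { apply (Rmult_le_reg_r (1 + dl * t / 2)); [nra|].
      rewrite Rmult_assoc, Rinv_l by nra. unfold Rdiv.
      assert (0 <= / dl) by (left; apply Rinv_0_lt_compat; lra).
      assert (EE : (1 + 2 * / dl) * (1 + dl * t * / 2) = 1 + 2 * / dl + dl * t / 2 + t)
        by (field; lra). rewrite EE. assert (0 <= dl * t) by nra. lra. }
    lra.
  - pose proof (Fq_bounds nu i) as [Fb _]. fold s in Fb.
    assert (Hs : s < S0).
    { unfold S0. pose proof ln10_ge1.
      assert (HL : ln (P (nu * s)) < ln (Kc + 1)) by (apply ln_increasing; [apply P_pos | lra]).
      rewrite ln_P in HL. apply (Rmult_lt_reg_r (nu * ln 10)); [nra|].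
      unfold Rdiv. rewrite Rmult_assoc, Rinv_l by nra. lra. }
    assert (t <= Kc * S0 + 1) by nra.
    assert (P (ns * s - dl * t) <= P (ns * S0)) by (apply P_le; nra).
    pose proof (P_pos (ns * s - dl * t)).
    assert ((t + 1) * P (ns * s - dl * t) <= (Kc * S0 + 2) * P (ns * S0)).
    { apply Rmult_le_compat; lra. }
    assert (0 <= 2 / dl) by (apply Rdiv_le_0_compat; lra). lra.
Qed.



Definition c6 := exp (- (ns * ln 6)).
Definition Mp := Sq nu 1 + Bc / c6.

Lemma Rq_ge1 (q : Z) : (1 < q)%Z -> 1 <= Rpower (IZR q) ns.
Proof.
  intros Hq. apply IZR_lt in Hq. unfold Rpower. rewrite <- exp_0.
  assert (0 <= ln (IZR q)) by (rewrite <- ln_1; apply ln_le; lra).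
  assert (0 <= ns * ln (IZR q)) by (apply Rmult_le_pos; lra).
  destruct H0 as [H0|H0]; [left; apply exp_increasing; auto | rewrite H0; lra].
Qed.

Lemma Bc_pos : 0 <= Bc.
Proof.
  pose proof (Hbound O). pose proof (P_pos (ns * Sq nu 0 - dl * Sq nu 1)).
  destruct (Sq_ge nu hnu 1). pose proof (pos_INR 1).
  assert (0 <= (Sq nu 1 + 1) * P (ns * Sq nu 0 - dl * Sq nu 1)) by (apply Rmult_le_pos; lra). lra.
Qed.

Lemma Sq_bound (q : Z) j : (1 < q)%Z ->
  (j = O \/ exists i, j = S i /\ P (g i) < 6 * IZR q) ->
  Sq nu (S j) <= Mp * Rpower (IZR q) ns.
Proof.
  intros Hq Hj. pose proof (Rq_ge1 q Hq) as HR. pose proof Hq as Hq'. apply IZR_lt in Hq'.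
  assert (Hc6 : 0 < c6) by apply exp_pos.
  assert (HB : 0 <= Bc / c6) by (apply Rdiv_le_0_compat; auto using Bc_pos).
  destruct (Sq_ge nu hnu 1) as [S1 _].
  unfold Mp. destruct Hj as [-> | [i [-> Hi]]].
  - simpl in S1. nra.
  - pose proof (Hbound i) as HB2.
    destruct (Sq_ge nu hnu (S i)) as [T1 _]. pose proof (pos_INR (S i)).
    set (s := Sq nu i) in *. set (t := Sq nu (S i)) in *.
    assert (E1 : Sq nu (S (S i)) <= P (nu * t) * (t + 1)).
    { rewrite Sq_S. pose proof (Fq_bounds nu (S i)) as [_ F]. fold t in F.
      pose proof (P_ge1 (nu * t) ltac:(nra)). fold t. assert (Fq nu (S i) * t <= P (nu * t) * t) by (apply Rmult_le_compat_r; lra). nra. }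
    assert (E2 : P (nu * t) = P (ns * s - dl * t) * P (ns * (t - s))).
    { rewrite <- P_plus. f_equal. unfold dl. ring. }
    assert (E3 : P (ns * (t - s)) * c6 <= Rpower (IZR q) ns).
    { unfold c6, P, Rpower. rewrite <- exp_plus. apply Rlt_le, exp_increasing.
      assert (ln (P (g i) / 6) < ln (IZR q)).
      { apply ln_increasing. apply Rdiv_lt_0_compat; [apply P_pos | lra]. lra. }
      unfold Rdiv in H0. rewrite ln_mult, ln_Rinv, ln_P in H0 by (try apply P_pos; try apply Rinv_0_lt_compat; lra).
      unfold g in H0. fold s t in H0.
      assert (ns * ((t - s) * ln 10 - ln 6) < ns * ln (IZR q)) by (apply Rmult_lt_compat_l; lra).
      lra. }
    assert (Sq nu (S (S i)) <= Bc * P (ns * (t - s))).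
    { rewrite E2 in E1. pose proof (P_pos (ns * (t - s))).
      assert ((t + 1) * P (ns * s - dl * t) * P (ns * (t - s)) <= Bc * P (ns * (t - s)))
        by (apply Rmult_le_compat_r; lra). nra. }
    assert (Bc * P (ns * (t - s)) <= Bc / c6 * Rpower (IZR q) ns).
    { apply (Rmult_le_reg_r c6); auto.
      replace (Bc / c6 * Rpower (IZR q) ns * c6) with (Bc * Rpower (IZR q) ns) by (field; lra).
      rewrite Rmult_assoc. apply Rmult_le_compat_l; auto using Bc_pos. }
    assert (0 <= Sq nu 1 * Rpower (IZR q) ns) by (simpl in S1; nra). lra.
Qed.

Lemma ln2_pos : 0 < ln 2.
Proof. rewrite <- ln_1. apply ln_increasing; lra. Qed.

Lemma ln10_le : ln 10 <= 4 * ln 2.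
Proof.
  replace (4 * ln 2) with (INR 4 * ln 2) by (simpl; ring). rewrite <- ln_pow by lra.
  apply ln_le; simpl; lra.
Qed.

Lemma uniform_bound (p q : Z) w : (1 < q)%Z -> approx (xi nu a) p q w ->
  w <= (2 + 4 * Mp) * Rpower (IZR q) ns.
Proof.
  intros Hq [_ Ha]. pose proof Hq as Hq'. apply IZR_lt in Hq'.
  destruct (g_min (IZR q)) as [j [Hj1 Hj2]].
  pose proof (key2 p q j Hq Hj1) as K.
  pose proof (Sq_bound q j Hq Hj2) as SB.
  pose proof (Rq_ge1 q Hq) as HR.
  destruct (Sq_ge nu hnu (S j)) as [T1 _]. pose proof (pos_INR (S j)).
  set (X := Sq nu (S j)) in *.
  assert (EX : 2 * IZR q * P X = exp (ln 2 + ln (IZR q) + X * ln 10)).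
  { rewrite !exp_plus, !exp_ln by lra. reflexivity. }
  rewrite EX in K. unfold Rdiv in K. rewrite Rmult_1_l, <- exp_Ropp in K.
  unfold Rpower in Ha.
  assert (Hl : - (ln 2 + ln (IZR q) + X * ln 10) < - w * ln (IZR q)).
  { apply exp_lt_inv. lra. }
  pose proof ln2_pos. pose proof ln10_le. pose proof ln10_ge1.
  assert (Hq2 : 2 <= IZR q) by (apply IZR_le; lia).
  assert (HlQ : ln 2 <= ln (IZR q)) by (apply ln_le; lra).
  assert (X * ln 10 <= X * (4 * ln 2)) by (apply Rmult_le_compat_l; lra).
  assert (X * ln 2 <= X * ln (IZR q)) by (apply Rmult_le_compat_l; lra).
  assert (w * ln (IZR q) < (2 + 4 * X) * ln (IZR q)) by lra.
  assert (w < 2 + 4 * X).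
  { apply (Rmult_lt_reg_r (ln (IZR q))); lra. }
  nra.
Qed.

End Upper.

Theorem mainTheorem1 (nu : R) (hnu : 0 < nu) (a : nat -> Z)
  (ha : forall n, a n = 1%Z \/ a n = 2%Z) :
  nu_Liouville nu
    (Series (fun n => IZR (a n) * Rpower 10 (- IZR (sseq nu n)))).
Proof.
  change (Series (fun n => IZR (a n) * Rpower 10 (- IZR (sseq nu n)))) with (xi nu a).
  split; [|split].
  - exists (pp nu a), (qq nu), (Fq nu). split; [|split; [|split]].
    + intros k; apply qq_gt1; auto.
    + intros k. pose proof (Sq_ge nu hnu k) as [_ H]. lra.
    + apply (lim_lower _ nu hnu). intros k.
      pose proof (Fq_bounds nu k) as [F1 _]. destruct (Sq_ge nu hnu k) as [S1 _].
      pose proof (pos_INR k). pose proof (P_lin (nu * Sq nu k) ltac:(apply Rmult_le_pos; lra)).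
      nra.
    + intros k; apply approx_k; auto.
  - intros ns Hns. destruct (Rle_lt_dec ns nu) as [h|h]; auto. exfalso.
    destruct Hns as [_ [p [q [w [Hq [Hw [Ha Hl]]]]]]].
    apply is_lim_seq_spec in Hl.
    destruct (Hl (2 + 4 * Mp nu ns)) as [N HN]. specialize (HN N (Nat.le_refl N)).
    pose proof (uniform_bound nu hnu a ha ns h (p N) (q N) (w N) (Hq N) (Ha N)) as U.
    pose proof (Rq_ge1 nu hnu ns h (q N) (Hq N)).
    assert (w N / Rpower (IZR (q N)) ns <= 2 + 4 * Mp nu ns).
    { apply (Rmult_le_reg_r (Rpower (IZR (q N)) ns)); [lra|].
      unfold Rdiv. rewrite Rmult_assoc, Rinv_l by lra. lra. }
    lra.
  - intros b Hb. destruct (Rle_lt_dec nu b) as [h|h]; auto. exfalso.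
    set (m := Rmax b 0).
    assert (b <= m /\ 0 <= m /\ m < nu) by (unfold m, Rmax; destruct (Rle_dec b 0); lra).
    assert (Sset (xi nu a) ((m + nu) / 2)) by (apply Sset_lower; auto; lra).
    specialize (Hb _ H0). lra.
Qed.
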